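(* Let $M$ be a triangulated compact 3-manifold, possibly with boundary, with $t$ tetrahedra, and let $\mathcal{C}_M\subset\mathbb{R}^{7t}$ be its Haken normal cone. (1) $\mathcal{C}_M$ has at most $2^{7t}$ minimal vertex solutions. (2) The minimal Hilbert basis of $\mathcal{C}_M$ has at most $t^{7t}\,2^{49t^2+14t}$ elements.
   Context: Coordinates of $\mathbb{R}^{7t}$ are indexed by pairs (tetrahedron, elementary normal disk type), with 7 types per tetrahedron (4 triangle types separating one vertex from three, 3 quadrilateral types separating two vertices from two). The Haken normal cone $\mathcal{C}_M$ consists of the $v$ with all $v_i\ge0$ satisfying the matching equations: for each face shared by two tetrahedra and each pair of sides of that face, the sum of the coordinates of disk types in one tetrahedron meeting the face in an arc joining that pair of sides equals the corresponding sum in the other tetrahedron. A minimal vertex solution is the smallest nonzero integer point on an extreme ray of $\mathcal{C}_M$. The minimal Hilbert basis is the set of nonzero $v\in\mathcal{C}_M\cap\mathbb{Z}^{7t}$ not expressible as a sum of two nonzero elements of $\mathcal{C}_M\cap\mathbb{Z}^{7t}$. *)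

(* Defs.v *)
From HB Require Import structures.
From mathcomp Require Import all_boot all_order all_algebra all_fingroup.
Set Implicit Arguments. Unset Strict Implicit. Unset Printing Implicit Defensive.
Import Order.TTheory GRing.Theory Num.Theory.
Local Open Scope ring_scope.

(* Tetrahedron vertices are 'I_4 = {0,1,2,3}; face f : 'I_4 is the face
   opposite vertex f.  Normal disk types per tetrahedron are 'I_7:
   type u < 4  : the triangle separating vertex u from the other three;
   type 3 + k (k = 1,2,3) : the quadrilateral separating {0,k} from the
   other two vertices. *)

(* index (in 0..6) of the quad type separating {a,b} (a <> b) from the rest *)
Definition quad_of (a b : nat) : nat :=
  if a == 0%N then (b + 3)%N
  else if b == 0%N then (a + 3)%N
  else (6 - a - b + 3)%N.

Definition tri_type (u : 'I_4) : 'I_7 := widen_ord (isT : (4 <= 7)%N) u.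
Definition quad_type (u w : 'I_4) : 'I_7 := inord (quad_of u w).

(* Face-pairing data of a triangulation with t tetrahedra: face f of
   tetrahedron i is either free (boundary, None) or glued to face (s f)
   of tetrahedron j by the affine map induced by the vertex permutation s
   (restricted to the vertices of face f). *)
Definition gluing (t : nat) := 'I_t -> 'I_4 -> option ('I_t * {perm 'I_4}).

Definition valid_gluing (t : nat) (gl : gluing t) : Prop :=
  forall (i : 'I_t) (f : 'I_4) (j : 'I_t) (s : {perm 'I_4}),
    gl i f = Some (j, s) ->
    gl j (s f) = Some (i, (s^-1)%g) /\ (j, s f) <> (i, f).

Notation ncoord R t := {ffun 'I_t * 'I_7 -> R}.

(* Sum of the coordinates of the disk types of tetrahedron i meeting face f
   in the normal arc cutting off vertex u of that face (i.e. the arc joining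
   the two sides of the face adjacent to u): triangle u and the quad
   separating {u,f} from the other two vertices. *)
Definition arc_sum (R : realFieldType) (t : nat) (v : ncoord R t)
    (i : 'I_t) (f u : 'I_4) : R :=
  v (i, tri_type u) + v (i, quad_type u f).

Definition matching (R : realFieldType) (t : nat) (gl : gluing t)
    (v : ncoord R t) : Prop :=
  forall (i : 'I_t) (f : 'I_4) (j : 'I_t) (s : {perm 'I_4}),
    gl i f = Some (j, s) ->
    forall u : 'I_4, u != f -> arc_sum v i f u = arc_sum v j (s f) (s u).

Definition scal (R : realFieldType) (t : nat) (l : R) (w : ncoord R t)
  : ncoord R t := [ffun x => l * w x].

Definition in_cone (R : realFieldType) (t : nat) (gl : gluing t)
    (v : ncoord R t) : Prop :=
  (forall x, 0 <= v x) /\ matching gl v.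

Definition integral (R : realFieldType) (t : nat) (v : ncoord R t) : Prop :=
  forall x, exists z : int, v x = z%:~R.

Definition extreme_ray (R : realFieldType) (t : nat) (gl : gluing t)
    (w : ncoord R t) : Prop :=
  in_cone gl w /\ w <> 0 /\
  forall a b : ncoord R t, in_cone gl a -> in_cone gl b -> a + b = w ->
    exists2 l : R, 0 <= l & a = scal l w.

Definition minimal_vertex_solution (R : realFieldType) (t : nat)
    (gl : gluing t) (w : ncoord R t) : Prop :=
  extreme_ray gl w /\ integral w /\
  forall l : R, 0 < l -> integral (scal l w) -> 1 <= l.

Definition hilbert_basis_elt (R : realFieldType) (t : nat)
    (gl : gluing t) (v : ncoord R t) : Prop :=
  in_cone gl v /\ integral v /\ v <> 0 /\
  ~ (exists a b : ncoord R t,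
       in_cone gl a /\ integral a /\ a <> 0 /\
       in_cone gl b /\ integral b /\ b <> 0 /\ a + b = v).

(* Main.v *)
Require Import Defs.
From HB Require Import structures.
From mathcomp Require Import all_boot all_order all_algebra all_fingroup.
From mathcomp Require Import ring lra zify.
From Stdlib Require Import ClassicalEpsilon Classical_Prop.
Set Implicit Arguments. Unset Strict Implicit. Unset Printing Implicit Defensive.
Import Order.TTheory GRing.Theory Num.Theory.

Section Helpers.
Local Open Scope ring_scope.

Section Basics.
Local Open Scope ring_scope.
Variables (t : nat) (gl : gluing t).
Local Notation X := ('I_t * 'I_7)%type.
Local Notation E := ('I_t * 'I_4 * 'I_4)%type.

Definition eqs (e : E) : option (X * X * X * X) :=
  let: (i, f, u) := e in
  match gl i f with
  | Some (j, s) => if u != f then Some ((i, tri_type u), (i, quad_type u f),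
                     (j, tri_type (s u)), (j, quad_type (s u) (s f))) else None
  | None => None end.

Definition pa e := omap (fun q : X * X * X * X => q.1.1.1) (eqs e).
Definition pb e := omap (fun q : X * X * X * X => q.1.1.2) (eqs e).
Definition pc e := omap (fun q : X * X * X * X => q.1.2) (eqs e).
Definition pd e := omap (fun q : X * X * X * X => q.2) (eqs e).
Definition ind (o : option X) (x : X) : int := (o == Some x)%:R.
Definition aZ e x : int := ind (pa e) x - ind (pc e) x + (ind (pb e) x - ind (pd e) x).

Definition kerm (R : realFieldType) (v : ncoord R t) :=
  forall e, \sum_x (aZ e x)%:~R * v x = 0.

Lemma sum_ind (R : realFieldType) o (v : X -> R) :
  \sum_x (ind o x)%:~R * v x = oapp v 0 o.
Proof.
case: o => [a|] /=; last by rewrite big1 // => x _; rewrite /ind /= mul0r.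
rewrite (bigD1 a) //= big1 ?addr0; first by rewrite /ind eqxx mul1r.
move=> x /negbTE xa; rewrite /ind /=.
by rewrite (_ : (Some a == Some x) = false) ?mul0r // eq_sym; apply/negbTE; rewrite inj_eq //; [rewrite xa| move=> ? ? []].
Qed.

Lemma sum_a (R : realFieldType) e (v : X -> R) :
  \sum_x (aZ e x)%:~R * v x =
  (oapp v 0 (pa e) - oapp v 0 (pc e)) + (oapp v 0 (pb e) - oapp v 0 (pd e)).
Proof.
rewrite -!sum_ind -!sumrB -big_split /=; apply: eq_bigr => x _.
by rewrite /aZ !intrD !intrN; ring.
Qed.
Lemma matching_ker (R : realFieldType) (v : ncoord R t) : matching gl v <-> kerm v.
Proof.
split.
- move=> M [[i f] u]; rewrite sum_a /pa /pb /pc /pd /eqs.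
  case E1: (gl i f) => [[j s]|] //=; last by rewrite !subrr addr0.
  case: ifP => uf /=; last by rewrite !subrr addr0.
  have := M i f j s E1 u uf; rewrite /arc_sum /= => H.
  lra.
- move=> K i f j s E1 u uf; have := K (i, f, u).
  rewrite sum_a /pa /pb /pc /pd /eqs E1 uf /= /arc_sum => H.
  lra.
Qed.
End Basics.
Lemma some_eq (T : eqType) (a b : T) : (Some a == Some b) = (a == b).
Proof. by []. Qed.
Lemma sum_opt m (o : option 'I_m) : \sum_j ((o == Some j)%:R : int) = (o != None)%:R.
Proof.
case: o => [a|].
  rewrite (bigD1 a) // some_eq eqxx big1 ?addr0 // => j ja.
  by rewrite some_eq eq_sym (negbTE ja).
by rewrite big1.
Qed.
Lemma entry_le1 (b1 b2 : bool) : `|(b1%:R - b2%:R : int)| <= 1.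
Proof. by case: b1; case: b2. Qed.
Lemma sign_norm (k : nat) (x : int) : `|(-1) ^+ k * x| = `|x|.
Proof. by rewrite normrM normrX normrN1 expr1n mul1r. Qed.

Definition netmx m (al ga : 'I_m -> option 'I_m) : 'M[int]_m :=
  \matrix_(i, j) ((al i == Some j)%:R - (ga i == Some j)%:R).

Lemma minor_netmx m (al ga : 'I_m.+1 -> option 'I_m.+1) i j0 :
  row' i (col' j0 (netmx al ga)) =
  netmx (fun i' => obind (unlift j0) (al (lift i i')))
        (fun i' => obind (unlift j0) (ga (lift i i'))).
Proof.
have key : forall (o : option 'I_m.+1) j',
   (o == Some (lift j0 j')) = (obind (unlift j0) o == Some j').
  move=> [k|] j' //.
  rewrite some_eq /=.
  case: (eqVneq j0 k) => [<-|ne].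
    by rewrite unlift_none (negbTE (neq_lift _ _)).
  case: (unlift_some ne) => j1 -> ->.
  by rewrite some_eq (inj_eq (@lift_inj _ _)).
by apply/matrixP => i' j'; rewrite !mxE !key.
Qed.
Lemma TU m (al ga : 'I_m -> option 'I_m) : `|\det (netmx al ga)| <= 1.
Proof.
elim: m al ga => [|m IH] al ga; first by rewrite det_mx00 normr1.
case: (boolP [forall i, [&& al i != None, ga i != None & al i != ga i]]) => [/forallP full|].
  set A := netmx al ga.
  have Au : A *m const_mx 1 = 0 :> 'cV_m.+1.
    apply/matrixP => i k; rewrite !mxE.
    under eq_bigr do rewrite !mxE mulr1.
    rewrite sumrB !sum_opt.
    by case/and3P: (full i) => -> -> _; rewrite subrr.
  have : (\det A)%:M *m (const_mx 1 : 'cV[int]_m.+1) = 0.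
    by rewrite -mul_adj_mx -mulmxA Au mulmx0.
  move/matrixP/(_ ord0 ord0); rewrite mul_scalar_mx !mxE mulr1 => ->.
  by rewrite normr0.
rewrite negb_forall => /existsP [i Hi].
have [j0 Hj0] : exists j0, forall j, j != j0 -> netmx al ga i j = 0.
  move: Hi.
  case Ha: (al i) => [a|]; case Hc: (ga i) => [c|] H.
  - move: H; rewrite /= negbK some_eq => /eqP ac.
    by exists a => j _; rewrite mxE Ha Hc ac subrr.
  - exists a => j ja; rewrite mxE Ha Hc /= subr0.
    by rewrite some_eq eq_sym (negbTE ja).
  - exists c => j jc; rewrite mxE Ha Hc /= sub0r.
    by rewrite some_eq eq_sym (negbTE jc) oppr0.
  - by exists ord0 => j _; rewrite mxE Ha Hc subrr.
rewrite (expand_det_row _ i) (bigD1 j0) //= big1 ?addr0; last first.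
  by move=> j /Hj0 ->; rewrite mul0r.
rewrite normrM /cofactor sign_norm minor_netmx.
rewrite -[1]mulr1; apply: ler_pM => //; try exact: IH.
by rewrite mxE entry_le1.
Qed.
Definition net2 m (a1 g1 a2 g2 : 'I_m -> option 'I_m) (D : {set 'I_m}) : 'M[int]_m :=
  \matrix_(i, j) (netmx a1 g1 i j + (i \in D)%:R * netmx a2 g2 i j).

Lemma net2_bound m (a2 g2 : 'I_m -> option 'I_m) k :
  forall a1 g1 (D : {set 'I_m}), #|D| = k ->
  `|\det (net2 a1 g1 a2 g2 D)| <= 2 ^+ k.
Proof.
elim: k => [|k IH] a1 g1 D cD.
  move/cards0_eq: cD => ->.
  rewrite expr0 (_ : net2 _ _ _ _ _ = netmx a1 g1) ?TU //.
  by apply/matrixP => i j; rewrite !mxE in_set0 mul0r addr0.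
have /set0Pn [i0 Hi0] : D != set0 by rewrite -card_gt0 cD.
set D' := D :\ i0.
have cD' : #|D'| = k by move: cD; rewrite (cardsD1 i0 D) Hi0 => -[].
set a1' := fun i => if i == i0 then a2 i0 else a1 i.
set g1' := fun i => if i == i0 then g2 i0 else g1 i.
rewrite (@determinant_multilinear _ _ _ (net2 a1 g1 a2 g2 D') (net2 a1' g1' a2 g2 D') i0 1 1).
- rewrite !mul1r exprS mulr2n mulrDl mul1r.
  apply: le_trans (ler_normD _ _) _.
  by apply: lerD; apply: IH.
- apply/rowP => j; rewrite !mxE /a1' /g1' eqxx Hi0 /D' setD11 /=.
  by rewrite mul1r mul0r !mul1r !addr0.
- apply/matrixP => i j; have L : lift i0 i != i0 by rewrite eq_sym neq_lift.
  by rewrite !mxE /D' in_setD1 L.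
- apply/matrixP => i j; have L : lift i0 i != i0 by rewrite eq_sym neq_lift.
  by rewrite !mxE /D' in_setD1 L /a1' /g1' (negbTE L).
Qed.
Section Mat.
Variables (t : nat) (gl : gluing t).
Local Notation X := ('I_t * 'I_7)%type.
Local Notation E := ('I_t * 'I_4 * 'I_4)%type.

Definition mat k (rho : 'I_k -> E) (ka : 'I_k -> X) : 'M[int]_k :=
  \matrix_(i, j) aZ gl (rho i) (ka j).

Definition conv k (ka : 'I_k -> X) (o : option X) : option 'I_k :=
  obind (fun a => [pick j | ka j == a]) o.

Lemma convE k (ka : 'I_k -> X) o j : injective ka ->
  (conv ka o == Some j) = (o == Some (ka j)).
Proof.
move=> inj; case: o => [a|] //=.
case: pickP => [j1 /eqP <-|H] /=.
  by rewrite !some_eq (inj_eq inj).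
by rewrite some_eq; have := H j; rewrite /= eq_sym => ->.
Qed.

Lemma mat_bound k (rho : 'I_k -> E) (ka : 'I_k -> X) : injective ka -> `|\det (mat rho ka)| <= 2 ^+ k.
Proof.
move=> inj.
have -> : mat rho ka = net2 (fun i => conv ka (pa gl (rho i))) (fun i => conv ka (pc gl (rho i)))
   (fun i => conv ka (pb gl (rho i))) (fun i => conv ka (pd gl (rho i))) setT.
  apply/matrixP => i j; rewrite !mxE in_setT mul1r /aZ /ind !convE //.
by apply: net2_bound; rewrite cardsT card_ord.
Qed.
End Mat.
Lemma fin_min (R : realFieldType) (T : finType) (P : pred T) (F : T -> R) x0 :
  P x0 -> exists y, P y /\ forall x, P x -> F y <= F x.
Proof. by move=> Px0; case: (arg_minP F Px0) => y Py Hy; exists y. Qed.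

Section Cone.
Variables (R : realFieldType) (t : nat) (gl : gluing t).
Local Notation X := ('I_t * 'I_7)%type.
Local Notation E := ('I_t * 'I_4 * 'I_4)%type.
Local Notation vec := (ncoord R t).
Definition supp (v : vec) := [set x | v x != 0].
Definition cone (v : vec) := (forall x, 0 <= v x) /\ kerm gl v.

Lemma ker_lin (a b : R) (v w : vec) : kerm gl v -> kerm gl w ->
  kerm gl [ffun x => a * v x + b * w x].
Proof.
move=> Kv Kw e.
under eq_bigr do rewrite ffunE mulrDr mulrCA [_ * (b * _)]mulrCA.
by rewrite big_split /= -!mulr_sumr Kv Kw !mulr0 addr0.
Qed.

Lemma minsupp k : forall g : vec, cone g -> g != 0 -> (#|supp g| <= k)%N ->
  exists r0, [/\ cone r0, r0 != 0, supp r0 \subset supp g &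
    forall y, cone y -> y != 0 -> supp y \subset supp r0 -> supp r0 \subset supp y].
Proof.
elim: k => [|k IH] g Cg g0 cg.
  exfalso; move: g0; rewrite leqn0 in cg; move/eqP/cards0_eq: cg => S0.
  case/eqP; apply/ffunP => x; rewrite ffunE.
  apply/eqP; apply: contraT => gx; have : x \in supp g by rewrite inE.
  by rewrite S0 inE.
case: (classic (exists y, [/\ cone y, y != 0, supp y \subset supp g & ~~ (supp g \subset supp y)])).
  case=> y [Cy y0 syg ngy].
  have [r0 [C0 r00 s0 M0]] : exists r0, [/\ cone r0, r0 != 0, supp r0 \subset supp y &
    forall y', cone y' -> y' != 0 -> supp y' \subset supp r0 -> supp r0 \subset supp y'].
    apply: IH => //; rewrite -ltnS; apply: leq_trans cg.
    by apply: proper_card; rewrite properE syg.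
  by exists r0; split => //; apply: subset_trans s0 syg.
move=> H; exists g; split => //.
move=> y Cy y0 syg; apply: contraT => N; case: H; by exists y.
Qed.

Lemma signlem (r0 : vec) : cone r0 ->
  (forall y, cone y -> y != 0 -> supp y \subset supp r0 -> supp r0 \subset supp y) ->
  forall y : vec, kerm gl y -> supp y \subset supp r0 -> (exists x, 0 < y x) ->
  forall x, 0 <= y x.
Proof.
move=> [P0 K0] Min y Ky syr [x1 yx1].
have [x0 [yx0 Hx0]] := @fin_min R _ (fun x => 0 < y x) (fun x => r0 x / y x) x1 yx1.
have r0x0 : 0 < r0 x0.
  rewrite lt_def P0 andbT.
  have : x0 \in supp y by rewrite inE gt_eqF.
  by move/(subsetP syr); rewrite inE.
set mu := r0 x0 / y x0.
have mu0 : 0 < mu by rewrite divr_gt0.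
set w : vec := [ffun x => 1 * r0 x + (- mu) * y x].
have Kw : kerm gl w by apply: ker_lin.
have Pw : forall x, 0 <= w x.
  move=> x; rewrite ffunE mul1r mulNr subr_ge0.
  case: (ltrP 0 (y x)) => yx.
    by rewrite -ler_pdivlMr //; apply: Hx0.
  by apply: le_trans (P0 x); rewrite pmulr_rle0.
have wx0 : w x0 = 0 by rewrite ffunE /mu mul1r mulNr divfK ?subrr ?gt_eqF.
have w0 : w = 0.
  apply/eqP; apply: contraT => wn0.
  have sw : supp w \subset supp r0.
    apply/subsetP => x; rewrite !inE ffunE mul1r mulNr => H.
    apply: contraT; rewrite negbK => /eqP r0x.
    have : y x != 0.
      by apply: contra H => /eqP ->; rewrite r0x mulr0 subrr.
    move=> yx; have : x \in supp y by rewrite inE.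
    by move/(subsetP syr); rewrite inE r0x eqxx.
  have := subsetP (Min w (conj Pw Kw) wn0 sw) x0.
  by rewrite !inE wx0 eqxx gt_eqF //= => /(_ isT).
move=> x; have := congr1 (fun f : vec => f x) w0.
rewrite ffunE ffunE mul1r mulNr => /eqP; rewrite subr_eq0 => /eqP H.
have : 0 <= mu * y x by rewrite -H.
by rewrite pmulr_rge0.
Qed.
End Cone.
Lemma reindex_codom (V : zmodType) (T : finType) k (ka : 'I_k -> T) (F : T -> V) :
  injective ka -> (forall x, x \notin codom ka -> F x = 0) ->
  \sum_x F x = \sum_j F (ka j).
Proof.
move=> inj H0; rewrite [RHS](partition_big ka predT) //=.
apply: eq_bigr => x _.
case: (boolP (x \in codom ka)) => [/codomP [j ->]|nx].
  by rewrite (big_pred1 j) // => l /=; rewrite (inj_eq inj).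
rewrite H0 // big1 // => j /eqP ejx; case/codomP: nx; by exists j.
Qed.

Section Z.
Variables (t : nat) (gl : gluing t).
Local Notation X := ('I_t * 'I_7)%type.
Local Notation E := ('I_t * 'I_4 * 'I_4)%type.

Lemma mat_inj k (rho : 'I_k -> E) (ka : 'I_k -> X) :
  \det (mat gl rho ka) != 0 -> injective ka.
Proof.
move=> H j1 j2 E12; apply/eqP; apply: contraT => ne; case/eqP: H.
rewrite -det_tr; apply: (determinant_alternate ne) => i; by rewrite !mxE E12.
Qed.

Lemma zexists (R : realFieldType) (r0 : ncoord R t) : r0 != 0 -> kerm gl r0 ->
  exists z : X -> int, [/\ exists x, z x != 0,
     forall e, \sum_x aZ gl e x * z x = 0,
     forall x, z x != 0 -> x \in supp r0 &
     forall x, `|z x| <= 2 ^+ (t * 7).-1].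
Proof.
move=> r00 K0.
have [x0 r0x0] : exists x0, r0 x0 != 0.
  case: (boolP [exists x, r0 x != 0]) => [/existsP//|/existsPn H].
  case/eqP: r00; apply/ffunP => x; rewrite ffunE; apply/eqP; exact: negbNE (H x).
set S := supp r0.
have x0S : x0 \in S by rewrite inE.
pose e0 : E := (x0.1, ord0, ord0).
pose P k := [exists rho : {ffun 'I_k -> E}, exists ka : {ffun 'I_k -> X},
   [forall j, ka j \in S] && (\det (mat gl rho ka) != 0)].
have P0 : exists k, P k.
  exists 0%N; apply/existsP; exists [ffun=> e0]; apply/existsP; exists [ffun=> x0].
  by rewrite det_mx00 oner_eq0 andbT; apply/forallP => -[].
have ub : forall k, P k -> (k <= t * 7)%N.
  move=> k /existsP [rho /existsP [ka /andP [_ d]]].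
  by have := leq_card _ (mat_inj d); rewrite card_ord card_prod !card_ord.
case: (ex_maxnP P0 ub) => m Pm Mx.
case/existsP: Pm => rho /existsP [ka /andP [/forallP kaS dm]].
have kinj := mat_inj dm.
have [c' c'S c'n] : exists2 c', c' \in S & c' \notin codom ka.
  case: (boolP [exists c, (c \in S) && (c \notin codom ka)]) => [/existsP [c /andP [] ]|/existsPn H].
    by move=> ? ?; exists c.
  exfalso.
  have H' : forall x, x \notin codom ka -> r0 x = 0.
    move=> x nx; have := H x; rewrite nx andbT inE negbK => /eqP //.
  pose N := map_mx intr (mat gl rho ka) : 'M[R]_m.
  pose v := \col_j r0 (ka j).
  have Nv : N *m v = 0.
    apply/matrixP => i k; rewrite !mxE.
    apply: (etrans _ (K0 (rho i))); rewrite (@reindex_codom _ _ _ ka) //; last first.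
      by move=> x nx; rewrite H' // mulr0.
    by apply: eq_bigr => j _; rewrite !mxE.
  have uN : N \in unitmx.
    by rewrite unitmxE unitfE det_map_mx intr_eq0.
  have v0 : v = 0 by rewrite -(mulKmx uN v) Nv mulmx0.
  have : x0 \in codom ka by apply: contraT => nx; rewrite H' ?eqxx in r0x0.
  case/codomP => j ej.
  by move: r0x0; rewrite ej; have := congr1 (fun M : 'M[R]_(m,1) => M j ord0) v0; rewrite !mxE => ->; rewrite eqxx.
pose ka' (l : 'I_m.+1) : X := if unlift ord0 l is Some j then ka j else c'.
pose rho' (e : E) (l : 'I_m.+1) : E := if unlift ord0 l is Some i then rho i else e.
pose G e := mat gl (rho' e) ka'.
have ka'S : forall l, ka' l \in S by move=> l; rewrite /ka'; case: unliftP.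
have ka'inj : injective ka'.
  move=> l1 l2; rewrite /ka'.
  case: unliftP => [j1 ->|->]; case: unliftP => [j2 ->|->] //.
  - by move/kinj ->.
  - by move=> e; case/negP: c'n; rewrite -e codom_f.
  - by move=> e; case/negP: c'n; rewrite e codom_f.
have Gdet : forall e, \det (G e) = 0.
  move=> e; apply/eqP; apply: contraT => d.
  have : P m.+1.
    apply/existsP; exists [ffun l => rho' e l]; apply/existsP; exists [ffun l => ka' l].
    apply/andP; split; first by apply/forallP => l; rewrite ffunE.
    suff -> : mat gl [ffun l => rho' e l] [ffun l => ka' l] = G e by [].
    by apply/matrixP => i j; rewrite !mxE !ffunE.
  by move/Mx; rewrite ltnn.
have cof : forall e l, cofactor (G e) ord0 l = cofactor (G e0) ord0 l.
  move=> e l; rewrite /cofactor; congr (_ * \det _).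
  by apply/matrixP => i j; rewrite !mxE /rho' liftK.
pose zl l := cofactor (G e0) ord0 l.
have zk : forall e, \sum_l aZ gl e (ka' l) * zl l = 0.
  move=> e; apply: (etrans _ (Gdet e)); rewrite (expand_det_row _ ord0); apply: eq_bigr => l _.
  by rewrite cof mxE /rho' unlift_none.
have z0 : zl ord0 != 0.
  rewrite /zl /cofactor expr0 mul1r.
  suff -> : row' ord0 (col' ord0 (G e0)) = mat gl rho ka by [].
  by apply/matrixP => i j; rewrite !mxE /rho' /ka' !liftK.
have mX : (m < t * 7)%N.
  by have := leq_card _ ka'inj; rewrite card_ord card_prod !card_ord.
have zb : forall l, `|zl l| <= 2 ^+ (t * 7).-1.
  move=> l; rewrite /zl /cofactor sign_norm.
  have -> : row' ord0 (col' l (G e0)) = mat gl rho (fun j => ka' (lift l j)).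
    by apply/matrixP => i j; rewrite !mxE /rho' liftK.
  have inj2 : injective (fun j => ka' (lift l j)) by move=> a b /ka'inj /lift_inj.
  apply: le_trans (mat_bound gl rho inj2) _.
  by rewrite ler_eXn2l //; lia.
pose zX (x : X) := \sum_(l | ka' l == x) zl l.
have zXk : forall l, zX (ka' l) = zl l.
  by move=> l; rewrite /zX (big_pred1 l) // => l' /=; rewrite (inj_eq ka'inj).
have zX0 : forall x, x \notin codom ka' -> zX x = 0.
  by move=> x nx; rewrite /zX big1 // => l /eqP e; case/negP: nx; rewrite -e codom_f.
exists zX; split.
- by exists (ka' ord0); rewrite zXk.
- move=> e; rewrite (@reindex_codom _ _ _ ka') //; last first.
    by move=> x /zX0 ->; rewrite mulr0.
  by apply: (etrans _ (zk e)); apply: eq_bigr => l _; rewrite zXk.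
- move=> x; case: (boolP (x \in codom ka')) => [/codomP [l ->] _|/zX0 ->]; first exact: ka'S.
  by rewrite eqxx.
- move=> x; case: (boolP (x \in codom ka')) => [/codomP [l ->]|/zX0 ->]; first by rewrite zXk.
  by rewrite normr0 exprn_ge0.
Qed.
End Z.
Section Core.
Variables (R : realFieldType) (t : nat) (gl : gluing t).
Local Notation X := ('I_t * 'I_7)%type.
Local Notation vec := (ncoord R t).

Lemma intr_sum_mul (F G : X -> int) :
  \sum_x (F x)%:~R * (G x)%:~R = (\sum_x F x * G x)%:~R :> R.
Proof.
rewrite (big_morph (fun z : int => z%:~R : R) (@intrD R) (mulr0z 1)).
by apply: eq_bigr => x _; rewrite intrM.
Qed.

Lemma core (h : vec) : cone gl h -> h != 0 ->
  exists r : vec, [/\ cone gl r, integral r, r != 0, supp r \subset supp h &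
     forall x, r x <= 2 ^+ (t * 7).-1].
Proof.
move=> Ch h0.
have [r0 [C0 r00 s0 M0]] := minsupp Ch h0 (leqnn #|supp h|).
have [z [[x1 zx1] zk zS zb]] := zexists r00 C0.2.
pose zR (s : int) : vec := [ffun x => (s * z x)%:~R].
have kz : forall s, kerm gl (zR s).
  move=> s e; under eq_bigr do rewrite ffunE.
  rewrite intr_sum_mul.
  under eq_bigr do rewrite mulrCA.
  by rewrite -mulr_sumr zk mulr0.
have sz : forall s, supp (zR s) \subset supp r0.
  move=> s; apply/subsetP => x; rewrite inE ffunE => H; apply: zS.
  by apply: contra H => /eqP ->; rewrite mulr0.
have [s [s1 spos]] : exists s : int, `|s| = 1 /\ forall x, 0 <= zR s x.
  case: (boolP [exists x, 0 < zR 1 x]) => [/existsP [x Hx]|/existsPn H].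
    exists 1; split; first by rewrite normr1.
    by apply: (signlem C0 M0 (kz 1) (sz 1)); exists x.
  exists (-1); split; first by rewrite normrN normr1.
  apply: (signlem C0 M0 (kz (-1)) (sz (-1))); exists x1.
  have := H x1; rewrite !ffunE mul1r -leNgt => H1.
  by rewrite mulN1r intrN oppr_gt0 lt_neqAle H1 andbT intr_eq0.
have s0' : s != 0 by rewrite -normr_eq0 s1.
exists (zR s); split.
- by split.
- by move=> x; exists (s * z x); rewrite ffunE.
- apply/eqP => /ffunP /(_ x1); rewrite !ffunE => /eqP.
  by rewrite intr_eq0 mulf_eq0 (negbTE s0') (negbTE zx1).
- exact: subset_trans (sz s) s0.
- move=> x; rewrite -[zR s x]ger0_norm ?spos // ffunE -intr_norm normrM s1 mul1r.
  have := zb x; rewrite -(ler_int R) => H; apply: le_trans H _.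
  by rewrite rmorphXn.
Qed.

Lemma exists_nz (r : vec) : r != 0 -> exists x, r x != 0.
Proof.
move=> r0; case: (boolP [exists x, r x != 0]) => [/existsP//|/existsPn H].
case/eqP: r0; apply/ffunP => x; rewrite ffunE; apply/eqP; exact: negbNE (H x).
Qed.

Lemma dec k : forall h : vec, cone gl h -> (#|supp h| <= k)%N -> forall x,
  h x <= k%:R * 2 ^+ (t * 7).-1 \/
  exists r : vec, [/\ cone gl r, integral r, r != 0, (forall y, r y <= h y) &
     forall y, r y <= 2 ^+ (t * 7).-1].
Proof.
set D : R := 2 ^+ (t * 7).-1.
have D0 : 0 <= D by rewrite exprn_ge0.
elim: k => [|k IH] h [Ph Kh] sh x.
  left; rewrite mul0r; move: sh; rewrite leqn0 => /eqP/cards0_eq S0.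
  have : x \notin supp h by rewrite S0 inE.
  by rewrite inE negbK => /eqP ->.
case: (eqVneq h 0) => [->|h0].
  by left; rewrite ffunE mulr_ge0.
have [r [[Pr Kr] Ir r0 srh rb]] := core (conj Ph Kh) h0.
have [y0 ry0] := exists_nz r0.
have ry0' : 0 < r y0 by rewrite lt_def ry0 Pr.
have [y1 [ry1 Hy1]] := @fin_min R _ (fun y => 0 < r y) (fun y => h y / r y) y0 ry0'.
set lam := h y1 / r y1.
have hy1 : 0 < h y1.
  rewrite lt_def Ph andbT.
  have : y1 \in supp r by rewrite inE gt_eqF.
  by move/(subsetP srh); rewrite inE.
have lam0 : 0 <= lam by rewrite divr_ge0 // ltW.
have hl : forall y, lam * r y <= h y.
  move=> y; case: (ltrP 0 (r y)) => ry.
    by rewrite -ler_pdivlMr //; apply: Hy1.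
  have -> : r y = 0 by apply/eqP; rewrite eq_le ry Pr.
  by rewrite mulr0.
case: (lerP 1 lam) => l1.
  right; exists r; split => // y.
  apply: le_trans (hl y); rewrite -[X in X <= _]mul1r.
  by apply: ler_wpM2r.
set h' : vec := [ffun y => 1 * h y + (- lam) * r y].
have Ch' : cone gl h'.
  split; last by apply: ker_lin.
  by move=> y; rewrite ffunE mul1r mulNr subr_ge0.
have h'y1 : h' y1 = 0 by rewrite ffunE mul1r mulNr /lam divfK ?subrr ?gt_eqF.
have sh' : (#|supp h'| <= k)%N.
  rewrite -ltnS; apply: leq_trans sh; apply: proper_card; rewrite properE.
  apply/andP; split.
    apply/subsetP => y; rewrite !inE; apply: contra => /eqP hy.
    have : r y == 0.
      apply: contraT => ry; have : y \in supp r by rewrite inE.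
      by move/(subsetP srh); rewrite inE hy eqxx.
    by move/eqP => ry; rewrite ffunE hy ry !mulr0 addr0.
  apply/subsetPn; exists y1; first by rewrite inE gt_eqF.
  by rewrite inE h'y1 eqxx.
have h'h : forall y, h' y <= h y.
  by move=> y; rewrite ffunE mul1r mulNr gerBl mulr_ge0.
case: (IH h' Ch' sh' x) => [H|[r' [C' I' n' r'h' r'b]]].
  left; rewrite -[k.+1]addn1 natrD mulrDl mul1r.
  have -> : h x = h' x + lam * r x by rewrite ffunE mul1r mulNr subrK.
  apply: lerD => //; apply: le_trans (rb x).
  by rewrite -[X in _ <= X]mul1r; apply: ler_wpM2r => //; apply: ltW.
right; exists r'; split => // y.
exact: le_trans (r'h' y) (h'h y).
Qed.
End Core.
Section Final.
Variables (R : realFieldType) (t : nat) (gl : gluing t).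
Local Notation X := ('I_t * 'I_7)%type.
Local Notation vec := (ncoord R t).

Lemma ker_scal (c : R) (v : vec) : kerm gl v -> kerm gl [ffun x => c * v x].
Proof.
move=> Kv e; under eq_bigr do rewrite ffunE mulrCA.
by rewrite -mulr_sumr Kv mulr0.
Qed.

Lemma mvs_uniq (w w' : vec) : minimal_vertex_solution gl w ->
  minimal_vertex_solution gl w' -> supp w = supp w' -> w = w'.
Proof.
move=> [[[Pw Mw] [w0 Ext]] [Iw Minw]] [[[Pw' Mw'] [w0' Ext']] [Iw' Minw']] sww.
have Kw := (matching_ker gl w).1 Mw.
have Kw' := (matching_ker gl w').1 Mw'.
set T := \sum_x w' x / w x.
have T0 : 0 <= T by apply: sumr_ge0 => x _; rewrite divr_ge0.
set eps := (1 + T)^-1.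
have eps0 : 0 < eps by rewrite invr_gt0 ltr_wpDr.
have epsT : eps * (1 + T) = 1 by rewrite mulVf // gt_eqF // ltr_wpDr.
pose a : vec := [ffun x => eps * w' x].
pose b : vec := [ffun x => 1 * w x + (- eps) * w' x].
have Ca : in_cone gl a.
  split; first by move=> x; rewrite ffunE mulr_ge0 // ltW.
  by apply/matching_ker; apply: ker_scal.
have Cb : in_cone gl b.
  split; last by apply/matching_ker; apply: ker_lin.
  move=> x; rewrite ffunE mul1r mulNr subr_ge0.
  case: (eqVneq (w x) 0) => wx.
    have : x \notin supp w' by rewrite -sww inE wx eqxx.
    by rewrite inE negbK => /eqP ->; rewrite mulr0 wx.
  have wx0 : 0 < w x by rewrite lt_def wx Pw.
  have H1 : w' x / w x <= T.
    rewrite /T (bigD1 x) //= lerDl; apply: sumr_ge0 => y _; exact: divr_ge0.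
  move: H1; rewrite ler_pdivrMr // => H1.
  have e0 := ltW eps0.
  nra.
have ab : a + b = w by apply/ffunP => x; rewrite !ffunE mul1r mulNr addrC subrK.
have [l l0 al] := Ext a b Ca Cb ab.
set c := l / eps.
have w'c : forall x, w' x = c * w x.
  move=> x; have := congr1 (fun f : vec => f x) al; rewrite /= !ffunE => H.
  by rewrite /c mulrAC -H mulrC mulKf // gt_eqF.
have c0 : 0 < c.
  rewrite lt_def divr_ge0 ?(ltW eps0) // andbT.
  apply/eqP => c0; apply: w0'; apply/ffunP => x; by rewrite w'c c0 mul0r ffunE.
have e1 : scal c w = w' by apply/ffunP => x; rewrite ffunE w'c.
have c1 : 1 <= c by apply: Minw => //; rewrite e1.
have e2 : scal c^-1 w' = w.
  by apply/ffunP => x; rewrite ffunE w'c mulKf // gt_eqF.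
have c2 : 1 <= c^-1 by apply: Minw' => //; [rewrite invr_gt0 | rewrite e2].
have cc : c = 1.
  apply/eqP; rewrite eq_le c1 andbT.
  by rewrite -invr_ge1 // ?unitfE ?gt_eqF // ltW.
by rewrite -e1 cc; apply/ffunP => x; rewrite ffunE mul1r.
Qed.

Lemma hb_bound (h : vec) : hilbert_basis_elt gl h ->
  forall x, h x <= ((t * 7) * 2 ^ (t * 7).-1)%N%:R.
Proof.
move=> [[Ph Mh] [Ih [h0 Nh]]] x.
have Kh := (matching_ker gl h).1 Mh.
have sh : (#|supp h| <= t * 7)%N.
  by apply: leq_trans (max_card _) _; rewrite card_prod !card_ord.
have tpos : (0 < t * 7)%N by have := ltn_ord x.1; lia.
have D0 : (0 : R) <= 2 ^+ (t * 7).-1 by rewrite exprn_ge0.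
rewrite natrM natrX.
case: (@dec R t gl _ h (conj Ph Kh) sh x) => [//|[r [[Pr Kr] Ir r0 rh rb]]].
case: (eqVneq r h) => [rh'|nrh].
  rewrite -rh'; apply: le_trans (rb x) _; rewrite -[X in X <= _]mul1r; apply: ler_wpM2r => //.
  by rewrite (ler_nat R 1).
exfalso; apply: Nh.
have Kb : kerm gl [ffun y => 1 * h y + (-1) * r y] by apply: ker_lin.
exists r, [ffun y => h y - r y].
split; first by split => //; apply/matching_ker.
split => //; split; first by apply/eqP.
split.
  split; first by move=> y; rewrite ffunE subr_ge0.
  apply/matching_ker => e; apply: (etrans _ (Kb e)); apply: eq_bigr => y _.
  by rewrite !ffunE mul1r mulN1r.
split.
  move=> y; rewrite ffunE; have [z1 ->] := Ih y; have [z2 ->] := Ir y.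
  by exists (z1 - z2); rewrite intrB.
split.
  move=> /ffunP e; case/eqP: nrh; apply/ffunP => y; have := e y.
  by rewrite !ffunE => /eqP; rewrite subr_eq0 => /eqP.
by apply/ffunP => y; rewrite !ffunE addrC subrK.
Qed.
End Final.

End Helpers.

Lemma arith t : ((t * 7 * 2 ^ (t * 7).-1).+1 ^ (t * 7) <= t ^ (7 * t) * 2 ^ (49 * t ^ 2 + 14 * t))%N.
Proof.
case: t => [|t]; first by [].
set n := (t.+1 * 7)%N.
have np : (0 < n)%N by rewrite /n; lia.
apply: (@leq_trans ((t.+1 * 2 ^ (n + 2)) ^ n)).
  rewrite leq_exp2r //.
  rewrite (_ : (n + 2 = n.-1 + 3)%N); last by lia.
  rewrite expnD.
  have := expn_gt0 2 n.-1; rewrite /n; nia.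
rewrite expnMn -expnM (_ : (7 * t.+1)%N = n); last by rewrite /n mulnC.
rewrite (_ : ((n + 2) * n = 49 * t.+1 ^ 2 + 14 * t.+1)%N) //.
by rewrite /n -mulnn; nia.
Qed.

Theorem lemma6p2 (R : realFieldType) (t : nat) (gl : gluing t) :
  valid_gluing gl ->
  (exists s : seq (ncoord R t),
      (size s <= 2 ^ (7 * t))%N /\
      forall w, minimal_vertex_solution gl w -> w \in s) /\
  (exists s : seq (ncoord R t),
      (size s <= t ^ (7 * t) * 2 ^ (49 * t ^ 2 + 14 * t))%N /\
      forall v, hilbert_basis_elt gl v -> v \in s).
Proof.
move=> _; split.
- pose pk (S : {set 'I_t * 'I_7}) : ncoord R t :=
    epsilon (inhabits 0%R) (fun w => minimal_vertex_solution gl w /\ supp w = S).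
  exists (map pk (enum (powerset [set: 'I_t * 'I_7]))); split.
    by rewrite size_map -cardE card_powerset cardsT card_prod !card_ord mulnC.
  move=> w Hw.
  have [Hp Hs] : minimal_vertex_solution gl (pk (supp w)) /\ supp (pk (supp w)) = supp w.
    exact: (epsilon_spec (inhabits (0%R : ncoord R t))
      (fun w0 => minimal_vertex_solution gl w0 /\ supp w0 = supp w) (ex_intro _ w (conj Hw erefl))).
  have -> : w = pk (supp w) by apply: (mvs_uniq Hw Hp); rewrite Hs.
  by apply: map_f; rewrite mem_enum powersetE subsetT.
- set B := ((t * 7) * 2 ^ (t * 7).-1)%N.
  exists (map (fun f : {ffun 'I_t * 'I_7 -> 'I_B.+1} => [ffun x => ((f x : nat)%:R : R)%R])
            (enum {ffun 'I_t * 'I_7 -> 'I_B.+1})); split.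
    rewrite size_map -cardE card_ffun card_ord card_prod !card_ord.
    exact: arith.
  move=> h Hh.
  have hb := hb_bound Hh.
  have Ih := Hh.2.1; have Ph := Hh.1.1.
  have ex : forall x, exists z : int, (h x == z%:~R)%R.
    by move=> x; have [z ->] := Ih x; exists z.
  pose n x := `|xchoose (ex x)|%N.
  have hn : forall x, (h x = (n x)%:R)%R /\ (n x <= B)%N.
    move=> x; have /eqP e := xchooseP (ex x).
    have z0 : (0 <= xchoose (ex x))%R by rewrite -(ler0z R) -e.
    have e' : (h x = (n x)%:R)%R by rewrite e -[X in (X%:~R)%R](gez0_abs z0).
    by split => //; rewrite -(ler_nat R) -e'.
  apply/mapP; exists [ffun x => inord (n x)]; first by rewrite mem_enum.
  by apply/ffunP => x; rewrite !ffunE inordK ?ltnS ?(hn x).2 // (hn x).1.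
Qed.
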